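(* The identities (A9) $x\wedge(y\wedge z)\approx z\wedge(y\wedge x)$, (J4) $x''\approx x$, (J5) $x'\approx (x\wedge y)'\wedge(x\wedge y')'$ form a 3-base for the variety $\mathbb{BA}$ of Boolean algebras (in the language $\langle\wedge,{}'\rangle$).
   Context: Algebras are of type $\langle \wedge, {}'\rangle$ with $\wedge$ binary and ${}'$ unary. The variety $\mathbb{BA}$ of Boolean algebras in this language consists of the algebras $\langle B,\wedge,{}'\rangle$ obtained from Boolean algebras by keeping only meet and complement (equivalently, the variety generated by the two-element Boolean algebra with meet and complement). A base for a variety is an independent set of identities (no identity in the set follows from the others) that defines the variety; an $n$-base is a base with exactly $n$ identities. *)

(* Defs.v *)
From Stdlib Require Import List Bool.

Inductive term : Type :=
| Var : nat -> term
| Meet : term -> term -> term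
| Comp : term -> term.

Definition identity : Type := (term * term)%type.

Record algebra : Type := Algebra {
  carrier :> Type;
  meet : carrier -> carrier -> carrier;
  comp : carrier -> carrier
}.

Fixpoint eval (A : algebra) (v : nat -> A) (t : term) : A :=
  match t with
  | Var n => v n
  | Meet s u => meet A (eval A v s) (eval A v u)
  | Comp s => comp A (eval A v s)
  end.

Definition holds (A : algebra) (e : identity) : Prop :=
  forall v : nat -> A, eval A v (fst e) = eval A v (snd e).

Definition models (A : algebra) (E : list identity) : Prop :=
  forall e, In e E -> holds A e.

Definition consequence (E : list identity) (e : identity) : Prop :=
  forall A : algebra, models A E -> holds A e.

Definition two : algebra := Algebra bool andb negb.

(* Membership in the variety BA generated by the two-element Boolean algebra
   (= Mod(Id(2)) by Birkhoff's HSP theorem). *)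
Definition in_BA (A : algebra) : Prop :=
  forall e : identity, holds two e -> holds A e.

Definition defines_BA (E : list identity) : Prop :=
  forall A : algebra, models A E <-> in_BA A.

Definition x : term := Var 0.
Definition y : term := Var 1.
Definition z : term := Var 2.

Definition A9 : identity := (Meet x (Meet y z), Meet z (Meet y x)).
Definition J4 : identity := (Comp (Comp x), x).
Definition J5 : identity :=
  (Comp x, Meet (Comp (Meet x y)) (Comp (Meet x (Comp y)))).

(* Main.v *)
Require Import Defs.
From Stdlib Require Import List Arith Lia Bool.

Definition Ax (A : algebra) : Prop :=
  (forall x y z : A, meet A x (meet A y z) = meet A z (meet A y x)) /\
  (forall x : A, comp A (comp A x) = x) /\
  (forall x y : A, comp A x = meet A (comp A (meet A x y)) (comp A (meet A x (comp A y)))).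

Lemma r1_e3 (A : algebra) (H : Ax A) : forall v0 v1 : A, (meet A (comp A (meet A v0 (comp A v1))) (comp A (meet A v0 v1))) = (comp A v0).
Proof.
  pose proof H as [h9 [h4 h5]]; intros v0 v1.
  pose proof (h4 v1) as i0.
  pose proof (h5 v0 (comp A v1)) as i1.
  congruence.
Qed.

Lemma r1_e15 (A : algebra) (H : Ax A) : forall v0 v1 v2 : A, (meet A (comp A (meet A v1 (comp A v2))) (meet A (comp A (meet A v1 v2)) v0)) = (meet A v0 (comp A v1)).
Proof.
  pose proof H as [h9 [h4 h5]]; intros v0 v1 v2.
  pose proof (h5 v1 v2) as i0.
  pose proof (h9 v0 (comp A (meet A v1 v2)) (comp A (meet A v1 (comp A v2)))) as i1.
  congruence.
Qed.

Lemma r1_e16 (A : algebra) (H : Ax A) : forall v0 v1 v2 : A, (meet A (comp A (meet A v0 (meet A v1 v2))) (comp A (meet A v2 (comp A (meet A v1 v0))))) = (comp A v2).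
Proof.
  pose proof H as [h9 [h4 h5]]; intros v0 v1 v2.
  pose proof (h9 v2 v1 v0) as i0.
  pose proof (h5 v2 (meet A v1 v0)) as i1.
  congruence.
Qed.

Lemma r1_e20 (A : algebra) (H : Ax A) : forall v0 v1 v2 : A, (meet A (comp A (meet A v0 (comp A (meet A v1 v2)))) (comp A (meet A v2 (meet A v1 v0)))) = (comp A v0).
Proof.
  pose proof H as [h9 [h4 h5]]; intros v0 v1 v2.
  pose proof (h9 v0 v1 v2) as i0.
  pose proof (r1_e3 A H v0 (meet A v1 v2)) as i1.
  congruence.
Qed.

Lemma r1_e82 (A : algebra) (H : Ax A) : forall v0 v1 v2 : A, (meet A (meet A (comp A (meet A v0 v1)) v2) (comp A v0)) = (meet A (comp A v0) (meet A v2 (comp A (meet A v0 v1)))).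
Proof.
  pose proof H as [h9 [h4 h5]]; intros v0 v1 v2.
  pose proof (h9 (comp A (meet A v0 v1)) v2 (comp A v0)) as i0.
  pose proof (h4 v1) as i1.
  pose proof (r1_e15 A H v2 v0 v1) as i2.
  pose proof (r1_e15 A H (meet A (comp A (meet A v0 v1)) v2) v0 (comp A v1)) as i3.
  congruence.
Qed.

Lemma r1_e83 (A : algebra) (H : Ax A) : forall v0 v1 : A, (meet A (comp A v0) (comp A v1)) = (meet A (comp A v1) (comp A v0)).
Proof.
  pose proof H as [h9 [h4 h5]]; intros v0 v1.
  pose proof (r1_e20 A H v1 v0 v0) as i0.
  pose proof (r1_e16 A H v0 v0 v1) as i1.
  pose proof (r1_e82 A H v0 (meet A v0 v1) (comp A (meet A v1 (comp A (meet A v0 v0))))) as i2.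
  congruence.
Qed.

Lemma r1_e84 (A : algebra) (H : Ax A) : forall v0 v1 : A, (meet A v0 (comp A v1)) = (meet A (comp A v1) v0).
Proof.
  pose proof H as [h9 [h4 h5]]; intros v0 v1.
  pose proof (h4 v0) as i0.
  pose proof (h4 v0) as i1.
  pose proof (r1_e83 A H (comp A v0) v1) as i2.
  congruence.
Qed.

Lemma r1_e85 (A : algebra) (H : Ax A) : forall v0 v1 : A, (meet A v0 v1) = (meet A v1 v0).
Proof.
  pose proof H as [h9 [h4 h5]]; intros v0 v1.
  pose proof (h4 v0) as i0.
  pose proof (h4 v0) as i1.
  pose proof (r1_e84 A H v1 (comp A v0)) as i2.
  congruence.
Qed.

Lemma comm (A : algebra) (H : Ax A) : forall k0 k1 : A, (meet A k0 k1) = (meet A k1 k0).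
Proof.
  pose proof H as [h9 [h4 h5]]; intros k0 k1.
  pose proof (r1_e85 A H k1 k0) as i0.
  congruence.
Qed.

Lemma assoc (A : algebra) (H : Ax A) : forall x y z : A, meet A x (meet A y z) = meet A (meet A x y) z.
Proof.
  pose proof H as [h9 [h4 h5]]; intros x y z. rewrite h9, (comm A H y x). apply comm; auto.
Qed.
Lemma r2_e4 (A : algebra) (H : Ax A) : forall v0 v1 v2 : A, (meet A v0 (meet A v1 v2)) = (meet A v1 (meet A v2 v0)).
Proof.
  pose proof H as [h9 [h4 h5]]; intros v0 v1 v2.
  pose proof ((assoc A H) v1 v2 v0) as i0.
  pose proof ((comm A H) (meet A v1 v2) v0) as i1.
  congruence.
Qed.

Lemma r2_e5 (A : algebra) (H : Ax A) : forall v0 v1 v2 : A, (meet A v0 (meet A v1 v2)) = (meet A v2 (meet A v0 v1)).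
Proof.
  pose proof H as [h9 [h4 h5]]; intros v0 v1 v2.
  pose proof ((comm A H) (meet A v0 v1) v2) as i0.
  pose proof ((assoc A H) v0 v1 v2) as i1.
  congruence.
Qed.

Lemma r2_e6 (A : algebra) (H : Ax A) : forall v0 v1 v2 : A, (meet A v0 (meet A v1 v2)) = (meet A v1 (meet A v0 v2)).
Proof.
  pose proof H as [h9 [h4 h5]]; intros v0 v1 v2.
  pose proof ((assoc A H) v1 v0 v2) as i0.
  pose proof ((comm A H) v0 v1) as i1.
  pose proof ((assoc A H) v0 v1 v2) as i2.
  congruence.
Qed.

Lemma r2_e7 (A : algebra) (H : Ax A) : forall v0 v1 v2 : A, (meet A v0 (meet A v1 v2)) = (meet A v2 (meet A v1 v0)).
Proof.
  pose proof H as [h9 [h4 h5]]; intros v0 v1 v2.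
  pose proof ((comm A H) v0 v1) as i0.
  pose proof (r2_e4 A H v2 v0 v1) as i1.
  congruence.
Qed.

Lemma r2_e9 (A : algebra) (H : Ax A) : forall v0 v1 : A, (meet A (comp A (meet A v0 v1)) (comp A (meet A v1 (comp A v0)))) = (comp A v1).
Proof.
  pose proof H as [h9 [h4 h5]]; intros v0 v1.
  pose proof ((comm A H) v1 v0) as i0.
  pose proof (h5 v1 v0) as i1.
  congruence.
Qed.

Lemma r2_e10 (A : algebra) (H : Ax A) : forall v0 v1 : A, (meet A (comp A (meet A v0 v1)) (comp A (meet A (comp A v1) v0))) = (comp A v0).
Proof.
  pose proof H as [h9 [h4 h5]]; intros v0 v1.
  pose proof ((comm A H) v0 (comp A v1)) as i0.
  pose proof (h5 v0 v1) as i1.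
  congruence.
Qed.

Lemma r2_e11 (A : algebra) (H : Ax A) : forall v0 v1 : A, (meet A (comp A (meet A v0 v1)) (comp A (meet A (comp A v0) v1))) = (comp A v1).
Proof.
  pose proof H as [h9 [h4 h5]]; intros v0 v1.
  pose proof ((comm A H) v1 (comp A v0)) as i0.
  pose proof (r2_e9 A H v0 v1) as i1.
  congruence.
Qed.

Lemma r2_e23 (A : algebra) (H : Ax A) : forall v0 v1 v2 v3 : A, (meet A v0 (meet A v1 (meet A v2 v3))) = (meet A v1 (meet A v0 (meet A v2 v3))).
Proof.
  pose proof H as [h9 [h4 h5]]; intros v0 v1 v2 v3.
  pose proof ((assoc A H) v0 v2 v3) as i0.
  pose proof ((assoc A H) v1 (meet A v0 v2) v3) as i1.
  pose proof ((assoc A H) v1 v2 v3) as i2.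
  pose proof (r2_e6 A H v0 v1 v2) as i3.
  pose proof ((assoc A H) v0 (meet A v1 v2) v3) as i4.
  congruence.
Qed.

Lemma r2_e24 (A : algebra) (H : Ax A) : forall v0 v1 v2 : A, (meet A v0 (meet A v1 (comp A v2))) = (meet A v1 (meet A v0 (comp A v2))).
Proof.
  pose proof H as [h9 [h4 h5]]; intros v0 v1 v2.
  pose proof (r2_e11 A H v0 v2) as i0.
  pose proof (r2_e11 A H v0 v2) as i1.
  pose proof (r2_e23 A H v1 v0 (comp A (meet A v0 v2)) (comp A (meet A (comp A v0) v2))) as i2.
  congruence.
Qed.

Lemma r2_e28 (A : algebra) (H : Ax A) : forall v0 v1 v2 : A, (meet A v0 (meet A v1 (comp A v2))) = (meet A (comp A v2) (meet A v0 v1)).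
Proof.
  pose proof H as [h9 [h4 h5]]; intros v0 v1 v2.
  pose proof (r2_e7 A H v1 v0 (comp A v2)) as i0.
  pose proof (r2_e24 A H v1 v0 v2) as i1.
  congruence.
Qed.

Lemma r2_e30 (A : algebra) (H : Ax A) : forall v0 v1 v2 : A, (meet A v0 (meet A v1 (comp A v2))) = (meet A v0 (meet A (comp A v2) v1)).
Proof.
  pose proof H as [h9 [h4 h5]]; intros v0 v1 v2.
  pose proof (r2_e24 A H v1 v0 v2) as i0.
  pose proof (r2_e5 A H v0 (comp A v2) v1) as i1.
  congruence.
Qed.

Lemma r2_e63 (A : algebra) (H : Ax A) : forall v0 v1 v2 : A, (meet A v0 (meet A (comp A v1) (comp A v2))) = (meet A (comp A v2) (meet A (comp A v1) v0)).
Proof.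
  pose proof H as [h9 [h4 h5]]; intros v0 v1 v2.
  pose proof (r2_e28 A H v0 (comp A v1) v2) as i0.
  pose proof (r2_e30 A H (comp A v2) v0 v1) as i1.
  congruence.
Qed.

Lemma r2_e66 (A : algebra) (H : Ax A) : forall v0 v1 : A, (meet A v1 (comp A (meet A v1 (meet A (comp A v0) (comp A (meet A v0 v1)))))) = (meet A v0 v1).
Proof.
  pose proof H as [h9 [h4 h5]]; intros v0 v1.
  pose proof ((comm A H) (comp A (meet A v1 (meet A (comp A v0) (comp A (meet A v0 v1))))) v1) as i0.
  pose proof ((assoc A H) v1 (comp A v0) (comp A (meet A v0 v1))) as i1.
  pose proof (h4 v1) as i2.
  pose proof (h4 (meet A v0 v1)) as i3.
  pose proof (r2_e9 A H v0 v1) as i4.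
  pose proof (r2_e9 A H (meet A v1 (comp A v0)) (comp A (meet A v0 v1))) as i5.
  congruence.
Qed.

Lemma r2_e69 (A : algebra) (H : Ax A) : forall v0 v1 : A, (meet A v1 (comp A (meet A (comp A v0) (meet A v1 (comp A (meet A v0 v1)))))) = (meet A v0 v1).
Proof.
  pose proof H as [h9 [h4 h5]]; intros v0 v1.
  pose proof (h4 v1) as i0.
  pose proof ((assoc A H) (comp A v0) v1 (comp A (meet A v0 v1))) as i1.
  pose proof (h4 (meet A (comp A v0) v1)) as i2.
  pose proof (h4 (meet A v0 v1)) as i3.
  pose proof (r2_e11 A H v0 v1) as i4.
  pose proof (r2_e10 A H (comp A (meet A v0 v1)) (comp A (meet A (comp A v0) v1))) as i5.
  congruence.
Qed.

Lemma r2_e72 (A : algebra) (H : Ax A) : forall v0 v1 v2 : A, (meet A (comp A (meet A v0 v2)) (meet A (comp A (meet A v0 (comp A v2))) v1)) = (meet A (comp A v0) v1).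
Proof.
  pose proof H as [h9 [h4 h5]]; intros v0 v1 v2.
  pose proof (h5 v0 v2) as i0.
  pose proof ((assoc A H) (comp A (meet A v0 v2)) (comp A (meet A v0 (comp A v2))) v1) as i1.
  congruence.
Qed.

Lemma r2_e74 (A : algebra) (H : Ax A) : forall v0 v1 : A, (meet A v0 (comp A v1)) = (meet A (comp A v1) v0).
Proof.
  pose proof H as [h9 [h4 h5]]; intros v0 v1.
  pose proof (h5 v1 v1) as i0.
  pose proof ((comm A H) (comp A (meet A v1 (comp A v1))) (comp A (meet A v1 v1))) as i1.
  pose proof (r2_e63 A H v0 (meet A v1 (comp A v1)) (meet A v1 v1)) as i2.
  pose proof (r2_e72 A H v1 v0 v1) as i3.
  congruence.
Qed.

Lemma r2_e75 (A : algebra) (H : Ax A) : forall v0 v1 : A, (meet A (comp A v0) (comp A v1)) = (meet A (comp A v1) (comp A v0)).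
Proof.
  pose proof H as [h9 [h4 h5]]; intros v0 v1.
  pose proof (h5 v1 v0) as i0.
  pose proof ((comm A H) (comp A (meet A v1 (comp A v0))) (comp A (meet A v1 v0))) as i1.
  pose proof (r2_e72 A H v1 (comp A v0) v0) as i2.
  pose proof (r2_e63 A H (comp A (meet A v1 v0)) (meet A v1 (comp A v0)) v0) as i3.
  congruence.
Qed.

Lemma r2_e78 (A : algebra) (H : Ax A) : forall v0 v1 : A, (meet A v0 (comp A (meet A v1 v0))) = (meet A (comp A v1) (comp A (meet A (comp A v1) (comp A v0)))).
Proof.
  pose proof H as [h9 [h4 h5]]; intros v0 v1.
  pose proof ((comm A H) (comp A (meet A v1 v0)) v0) as i0.
  pose proof (h4 v0) as i1.
  pose proof (r2_e11 A H v1 (comp A v0)) as i2.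
  pose proof (r2_e72 A H v1 (comp A (meet A (comp A v1) (comp A v0))) v0) as i3.
  congruence.
Qed.

Lemma r2_e79 (A : algebra) (H : Ax A) : forall v0 v1 : A, (meet A v0 (comp A (meet A v0 (comp A v1)))) = (meet A v1 (comp A (meet A v1 (comp A v0)))).
Proof.
  pose proof H as [h9 [h4 h5]]; intros v0 v1.
  pose proof (h4 v0) as i0.
  pose proof (h4 v0) as i1.
  pose proof (r2_e74 A H v1 v0) as i2.
  pose proof (r2_e78 A H v1 (comp A v0)) as i3.
  congruence.
Qed.

Lemma r2_e80 (A : algebra) (H : Ax A) : forall v0 v1 : A, (meet A v0 (comp A (meet A v0 v1))) = (meet A v0 (comp A (meet A v1 v0))).
Proof.
  pose proof H as [h9 [h4 h5]]; intros v0 v1.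
  pose proof (h4 v1) as i0.
  pose proof (r2_e79 A H (comp A v1) v0) as i1.
  pose proof (r2_e78 A H v0 v1) as i2.
  congruence.
Qed.

Lemma r2_e81 (A : algebra) (H : Ax A) : forall v0 v1 : A, (meet A v0 (comp A (meet A (comp A v1) v0))) = (meet A v1 (comp A (meet A v1 (comp A v0)))).
Proof.
  pose proof H as [h9 [h4 h5]]; intros v0 v1.
  pose proof (h4 v1) as i0.
  pose proof (h4 v1) as i1.
  pose proof (r2_e78 A H v0 (comp A v1)) as i2.
  congruence.
Qed.

Lemma r2_e83 (A : algebra) (H : Ax A) : forall v0 v1 : A, (meet A v0 (comp A (meet A (comp A v1) v0))) = (meet A v1 (comp A (meet A (comp A v0) v1))).
Proof.
  pose proof H as [h9 [h4 h5]]; intros v0 v1.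
  pose proof (r2_e81 A H v1 v0) as i0.
  pose proof (r2_e80 A H v0 (comp A v1)) as i1.
  congruence.
Qed.

Lemma r2_e91 (A : algebra) (H : Ax A) : forall v0 v1 : A, (meet A v0 (comp A (meet A v1 v0))) = (meet A (comp A v1) (comp A (meet A (comp A v1) (comp A v0)))).
Proof.
  pose proof H as [h9 [h4 h5]]; intros v0 v1.
  pose proof (h4 v1) as i0.
  pose proof (r2_e75 A H v0 v1) as i1.
  pose proof (r2_e83 A H (comp A v1) v0) as i2.
  congruence.
Qed.

Lemma r2_e94 (A : algebra) (H : Ax A) : forall v0 v1 : A, (meet A v0 (comp A v1)) = (meet A (comp A v1) v0).
Proof.
  pose proof H as [h9 [h4 h5]]; intros v0 v1.
  pose proof (r2_e72 A H v1 v0 v0) as i0.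
  pose proof (h5 v1 v0) as i1.
  pose proof (r2_e4 A H v0 (comp A (meet A v1 v0)) (comp A (meet A v1 (comp A v0)))) as i2.
  congruence.
Qed.

Lemma r2_e96 (A : algebra) (H : Ax A) : forall v0 v1 v2 : A, (meet A (comp A (meet A v1 v2)) (meet A v0 (comp A (meet A v1 (comp A v2))))) = (meet A v0 (comp A v1)).
Proof.
  pose proof H as [h9 [h4 h5]]; intros v0 v1 v2.
  pose proof (h5 v1 v2) as i0.
  pose proof (r2_e6 A H v0 (comp A (meet A v1 v2)) (comp A (meet A v1 (comp A v2)))) as i1.
  congruence.
Qed.

Lemma r2_e97 (A : algebra) (H : Ax A) : forall v0 v1 : A, (meet A v0 (comp A v0)) = (meet A v1 (comp A v1)).
Proof.
  pose proof H as [h9 [h4 h5]]; intros v0 v1.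
  pose proof (r2_e11 A H v0 v1) as i0.
  pose proof (r2_e4 A H (comp A (meet A (comp A v0) v1)) v1 (comp A (meet A v0 v1))) as i1.
  pose proof ((comm A H) (comp A v0) v0) as i2.
  pose proof (h4 v0) as i3.
  pose proof (r2_e91 A H v1 v0) as i4.
  pose proof (r2_e96 A H (comp A v0) (comp A v0) v1) as i5.
  congruence.
Qed.

Lemma r2_e98 (A : algebra) (H : Ax A) : forall v0 v1 v2 : A, (meet A v0 (meet A (comp A v0) v1)) = (meet A v1 (meet A v2 (comp A v2))).
Proof.
  pose proof H as [h9 [h4 h5]]; intros v0 v1 v2.
  pose proof (h4 v0) as i0.
  pose proof (r2_e97 A H (comp A v0) v2) as i1.
  pose proof (r2_e63 A H v1 v0 (comp A v0)) as i2.
  congruence.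
Qed.

Lemma r2_e100 (A : algebra) (H : Ax A) : forall v0 v1 : A, (meet A (comp A (meet A v0 v0)) (comp A (meet A v1 (comp A v1)))) = (comp A v0).
Proof.
  pose proof H as [h9 [h4 h5]]; intros v0 v1.
  pose proof (h4 v0) as i0.
  pose proof (h4 v0) as i1.
  pose proof (r2_e97 A H (comp A v0) v1) as i2.
  pose proof (r2_e11 A H v0 (comp A (comp A v0))) as i3.
  congruence.
Qed.

Lemma r2_e101 (A : algebra) (H : Ax A) : forall v0 v1 : A, (meet A (comp A (meet A v0 (comp A v0))) (comp A (meet A v1 v1))) = (comp A v1).
Proof.
  pose proof H as [h9 [h4 h5]]; intros v0 v1.
  pose proof (h4 v1) as i0.
  pose proof (r2_e97 A H v1 v0) as i1.
  pose proof (r2_e10 A H v1 (comp A v1)) as i2.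
  congruence.
Qed.

Lemma r2_e102 (A : algebra) (H : Ax A) : forall v0 v1 v2 : A, (meet A v0 (meet A v1 (comp A (meet A v0 v1)))) = (meet A v2 (comp A v2)).
Proof.
  pose proof H as [h9 [h4 h5]]; intros v0 v1 v2.
  pose proof (r2_e97 A H (meet A v0 v1) v2) as i0.
  pose proof ((assoc A H) v0 v1 (comp A (meet A v0 v1))) as i1.
  congruence.
Qed.

Lemma r2_e103 (A : algebra) (H : Ax A) : forall v0 v1 : A, (meet A v0 (comp A v0)) = (meet A v1 (meet A v1 (comp A v1))).
Proof.
  pose proof H as [h9 [h4 h5]]; intros v0 v1.
  pose proof (r2_e4 A H (comp A v1) v1 v1) as i0.
  pose proof ((comm A H) (meet A v1 v1) (comp A v1)) as i1.
  pose proof (r2_e100 A H v1 (meet A v1 v1)) as i2.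
  pose proof (r2_e102 A H (meet A v1 v1) (comp A (meet A v1 v1)) v0) as i3.
  congruence.
Qed.

Lemma r2_e108 (A : algebra) (H : Ax A) : forall v0 v1 v2 : A, (meet A v0 (meet A (comp A v0) v1)) = (meet A v2 (comp A v2)).
Proof.
  pose proof H as [h9 [h4 h5]]; intros v0 v1 v2.
  pose proof (r2_e103 A H v2 v1) as i0.
  pose proof (r2_e98 A H v0 v1 v1) as i1.
  congruence.
Qed.

Lemma r2_e111 (A : algebra) (H : Ax A) : forall v0 v1 : A, (meet A v0 v0) = (meet A v0 (comp A (meet A v1 (comp A v1)))).
Proof.
  pose proof H as [h9 [h4 h5]]; intros v0 v1.
  pose proof (h4 v0) as i0.
  pose proof (h4 v0) as i1.
  pose proof (r2_e108 A H (comp A v0) (comp A (meet A v0 (comp A (comp A v0)))) v1) as i2.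
  pose proof (r2_e69 A H v0 (comp A (comp A v0))) as i3.
  congruence.
Qed.

Lemma r2_e112 (A : algebra) (H : Ax A) : forall v0 v1 : A, (meet A v0 (comp A (meet A v1 (comp A v1)))) = v0.
Proof.
  pose proof H as [h9 [h4 h5]]; intros v0 v1.
  pose proof (h4 v0) as i0.
  pose proof (r2_e101 A H v1 (comp A v0)) as i1.
  pose proof (r2_e101 A H v1 v0) as i2.
  pose proof (r2_e111 A H v0 v1) as i3.
  pose proof (r2_e69 A H v0 (comp A (meet A v1 (comp A v1)))) as i4.
  congruence.
Qed.

Lemma r2_e113 (A : algebra) (H : Ax A) : forall v0 : A, (meet A v0 v0) = v0.
Proof.
  pose proof H as [h9 [h4 h5]]; intros v0.
  pose proof (r2_e112 A H v0 v0) as i0.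
  pose proof (r2_e111 A H v0 v0) as i1.
  congruence.
Qed.

Lemma r2_e115 (A : algebra) (H : Ax A) : forall v0 v1 : A, (meet A v0 (meet A v0 v1)) = (meet A v1 v0).
Proof.
  pose proof H as [h9 [h4 h5]]; intros v0 v1.
  pose proof (r2_e113 A H v0) as i0.
  pose proof (r2_e7 A H v1 v0 v0) as i1.
  congruence.
Qed.

Lemma r2_e118 (A : algebra) (H : Ax A) : forall v0 v1 : A, (meet A (comp A v0) (comp A (meet A v0 v1))) = (comp A v0).
Proof.
  pose proof H as [h9 [h4 h5]]; intros v0 v1.
  pose proof (h5 v0 v1) as i0.
  pose proof ((comm A H) (comp A (meet A v0 (comp A v1))) (comp A (meet A v0 v1))) as i1.
  pose proof ((comm A H) (comp A (meet A v0 v1)) (comp A v0)) as i2.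
  pose proof (r2_e115 A H (comp A (meet A v0 v1)) (comp A (meet A v0 (comp A v1)))) as i3.
  pose proof (r2_e96 A H (comp A (meet A v0 v1)) v0 v1) as i4.
  congruence.
Qed.

Lemma r2_e119 (A : algebra) (H : Ax A) : forall v0 v1 : A, (meet A v0 (comp A (meet A v1 (comp A v0)))) = v0.
Proof.
  pose proof H as [h9 [h4 h5]]; intros v0 v1.
  pose proof (h4 v0) as i0.
  pose proof (h4 v0) as i1.
  pose proof (r2_e94 A H v1 v0) as i2.
  pose proof (r2_e118 A H (comp A v0) v1) as i3.
  congruence.
Qed.

Lemma r2_e128 (A : algebra) (H : Ax A) : forall v0 v1 : A, (meet A v0 (comp A v1)) = (meet A (comp A v1) v0).
Proof.
  pose proof H as [h9 [h4 h5]]; intros v0 v1.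
  pose proof (r2_e113 A H v1) as i0.
  pose proof (r2_e112 A H v0 v1) as i1.
  pose proof (r2_e96 A H v0 v1 v1) as i2.
  congruence.
Qed.

Lemma r2_e150 (A : algebra) (H : Ax A) : forall v0 v1 : A, (meet A v0 (comp A (meet A v0 v1))) = (meet A (comp A v1) v0).
Proof.
  pose proof H as [h9 [h4 h5]]; intros v0 v1.
  pose proof (r2_e119 A H v1 v0) as i0.
  pose proof (h4 v1) as i1.
  pose proof (r2_e128 A H v0 v1) as i2.
  pose proof (r2_e66 A H (comp A v1) v0) as i3.
  congruence.
Qed.

Lemma g9 (A : algebra) (H : Ax A) : forall k0 k1 : A, (meet A k0 (meet A k0 k1)) = (meet A k0 k1).
Proof.
  pose proof H as [h9 [h4 h5]]; intros k0 k1.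
  pose proof ((comm A H) k1 k0) as i0.
  pose proof (r2_e115 A H k0 k1) as i1.
  congruence.
Qed.

Lemma idem (A : algebra) (H : Ax A) : forall k0 : A, (meet A k0 k0) = k0.
Proof.
  pose proof H as [h9 [h4 h5]]; intros k0.
  pose proof (r2_e113 A H k0) as i0.
  congruence.
Qed.

Lemma g6 (A : algebra) (H : Ax A) : forall k0 k1 : A, (meet A k0 (comp A (meet A k0 k1))) = (meet A k0 (comp A k1)).
Proof.
  pose proof H as [h9 [h4 h5]]; intros k0 k1.
  pose proof ((comm A H) (comp A k1) k0) as i0.
  pose proof (r2_e150 A H k0 k1) as i1.
  congruence.
Qed.

Lemma g16 (A : algebra) (H : Ax A) : forall k0 k1 : A, (meet A (comp A k0) (comp A (meet A k0 k1))) = (comp A k0).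
Proof.
  pose proof H as [h9 [h4 h5]]; intros k0 k1.
  pose proof (r2_e118 A H k0 k1) as i0.
  congruence.
Qed.

Lemma g8 (A : algebra) (H : Ax A) : forall k0 : A, (comp A (meet A k0 k0)) = (comp A k0).
Proof.
  pose proof H as [h9 [h4 h5]]; intros k0.
  pose proof (r2_e113 A H k0) as i0.
  congruence.
Qed.

Lemma abs1 (A : algebra) (H : Ax A) : forall k0 k1 : A, (meet A k0 (comp A (meet A k1 (comp A k1)))) = k0.
Proof.
  pose proof H as [h9 [h4 h5]]; intros k0 k1.
  pose proof (r2_e113 A H k0) as i0.
  pose proof (r2_e111 A H k0 k1) as i1.
  congruence.
Qed.

Lemma g18 (A : algebra) (H : Ax A) : forall k0 k1 : A, (meet A k0 (comp A (meet A (comp A k0) k1))) = k0.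
Proof.
  pose proof H as [h9 [h4 h5]]; intros k0 k1.
  pose proof (r2_e119 A H k0 k1) as i0.
  pose proof ((comm A H) (comp A k0) k1) as i1.
  congruence.
Qed.

Lemma g20 (A : algebra) (H : Ax A) : forall k0 : A, (meet A k0 (comp A (meet A k0 (comp A k0)))) = k0.
Proof.
  pose proof H as [h9 [h4 h5]]; intros k0.
  pose proof (r2_e113 A H k0) as i0.
  pose proof (r2_e111 A H k0 k0) as i1.
  congruence.
Qed.

Definition jn (A : algebra) (u v : A) : A := comp A (meet A (comp A u) (comp A v)).

Lemma ac4 (A : algebra) (H : Ax A) : forall p q r s : A,
  meet A (meet A p q) (meet A r s) = meet A (meet A s q) (meet A r p).
Proof.
  intros k0 k1 k2 k3.
  pose proof (comm A H) as c. pose proof (assoc A H) as a.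
  pose proof (c k3 k2). pose proof (a k1 k3 k2). pose proof (c (meet A k1 k3) k2).
  pose proof (a k0 k2 (meet A k1 k3)). pose proof (c (meet A k1 k3) (meet A k0 k2)).
  pose proof (c k3 k1). pose proof (c k2 k0). pose proof (a k0 k1 (meet A k2 k3)).
  pose proof (a k2 k3 k1). pose proof (c (meet A k2 k3) k1).
  pose proof (a k1 k2 k3). pose proof (a k0 (meet A k1 k2) k3).
  pose proof (a k3 k1 (meet A k2 k0)). pose proof (a k0 k1 k2).
  pose proof (a k3 (meet A k1 k2) k0). pose proof (c k3 (meet A k1 k2)).
  pose proof (a (meet A k1 k2) k3 k0). pose proof (a k1 k2 (meet A k3 k0)).
  pose proof (a k2 k3 k0). pose proof (c k0 k3).
  rewrite <- (a k0 k1 (meet A k2 k3)), (a k1 k2 k3), (c (meet A k1 k2) k3), (a k0 k3 (meet A k1 k2)).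
  rewrite (c k0 k3), <- (a k3 k0 (meet A k1 k2)).
  rewrite <- (a k3 k1 (meet A k2 k0)), (c k2 k0).
  f_equal. rewrite (a k0 k1 k2), (c k0 k1), <- (a k1 k0 k2), (c k0 k2). reflexivity.
Qed.

Lemma zc (A : algebra) (H : Ax A) : forall x y : A, meet A x (comp A x) = meet A y (comp A y).
Proof.
  pose proof H as [h9 [h4 h5]]; intros x y.
  pose proof (comm A H) as c.
  assert (E : forall u v : A, meet A u (comp A u) =
     meet A (meet A (comp A (meet A (comp A u) v)) (comp A (meet A (comp A u) (comp A v))))
            (meet A (comp A (meet A u v)) (comp A (meet A u (comp A v))))).
  { intros u v. rewrite <- (h5 u v), <- (h5 (comp A u) v), h4. reflexivity. }
  rewrite (E x y), (E y x).
  rewrite (c (comp A y) x), (c (comp A y) (comp A x)), (c y x), (c y (comp A x)).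
  apply ac4; auto.
Qed.

Lemma abs0 (A : algebra) (H : Ax A) : forall x y : A, meet A x (meet A y (comp A y)) = meet A y (comp A y).
Proof.
  intros x y. rewrite (zc A H y x), (assoc A H), (idem A H). reflexivity.
Qed.

Lemma hform (A : algebra) (H : Ax A) : forall x y : A, x = jn A (meet A x y) (meet A x (comp A y)).
Proof.
  pose proof H as [h9 [h4 h5]]; intros x y. unfold jn. rewrite <- (h5 x y), h4. reflexivity.
Qed.

Lemma jn_comm (A : algebra) (H : Ax A) : forall u v : A, jn A u v = jn A v u.
Proof. intros u v. unfold jn. rewrite (comm A H). reflexivity. Qed.

Lemma jn_assoc (A : algebra) (H : Ax A) : forall u v w : A, jn A u (jn A v w) = jn A (jn A u v) w.
Proof.
  pose proof H as [h9 [h4 h5]]; intros u v w. unfold jn. rewrite !h4, (assoc A H). reflexivity.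
Qed.

Lemma distr (A : algebra) (H : Ax A) : forall a b c : A,
  meet A a (jn A b c) = jn A (meet A a b) (meet A a c).
Proof.
  pose proof H as [h9 [h4 h5]]; intros a b c.
  pose proof (comm A H) as cm. pose proof (assoc A H) as asc.
  transitivity (jn A (meet A a b) (meet A a (meet A (comp A b) c))).
  - rewrite (hform A H (meet A a (jn A b c)) b) at 1. f_equal.
    + rewrite <- asc, (cm (jn A b c) b). unfold jn. rewrite (g18 A H). reflexivity.
    + rewrite <- asc, (cm (jn A b c) (comp A b)). unfold jn. rewrite (g6 A H), h4. reflexivity.
  - symmetry. rewrite (hform A H (meet A a c) b) at 1.
    rewrite (jn_assoc A H). f_equal.
    + unfold jn at 1.
      rewrite <- (asc a c b), (cm c b), (asc a b c).
      rewrite (g16 A H). rewrite h4. reflexivity.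
    + rewrite <- (asc a c (comp A b)), (cm c (comp A b)). reflexivity.
Qed.

Lemma distr2 (A : algebra) (H : Ax A) : forall a b c : A,
  jn A a (meet A b c) = meet A (jn A a b) (jn A a c).
Proof.
  pose proof H as [h9 [h4 h5]]; intros a b c.
  unfold jn at 1.
  replace (comp A (meet A b c)) with (jn A (comp A b) (comp A c)) by (unfold jn; rewrite !h4; reflexivity).
  rewrite (distr A H).
  unfold jn. rewrite h4. reflexivity.
Qed.

Lemma L1 (A : algebra) (H : Ax A) : forall x y z : A, meet A (meet A x y) (meet A x z) = meet A x (meet A z y).
Proof.
  intros x y z. pose proof (comm A H) as cm. pose proof (assoc A H) as asc.
  rewrite <- (asc x y (meet A x z)), (asc y x z), (cm y x), <- (asc x y z), (asc x x (meet A y z)), (idem A H), (cm y z).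
  reflexivity.
Qed.

Lemma L2 (A : algebra) (H : Ax A) : forall x y z w : A, meet A (meet A x y) (meet A z w) = meet A (meet A x z) (meet A y w).
Proof.
  intros x y z w. pose proof (comm A H) as cm. pose proof (assoc A H) as asc.
  rewrite <- (asc x y (meet A z w)), (asc y z w), (cm y z), <- (asc z y w), (asc x z (meet A y w)).
  reflexivity.
Qed.

Lemma AC3 (A : algebra) (H : Ax A) : forall x y z : A, meet A (meet A x y) z = meet A (meet A z y) x.
Proof.
  intros x y z. pose proof (comm A H) as cm. pose proof (assoc A H) as asc.
  rewrite (cm x y), <- (asc y x z), (cm x z), (asc y z x), (cm y z). reflexivity.
Qed.

Lemma AC3b (A : algebra) (H : Ax A) : forall x y z : A, meet A (meet A x y) z = meet A (meet A x z) y.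
Proof.
  intros x y z. pose proof (comm A H) as cm. pose proof (assoc A H) as asc.
  rewrite <- (asc x y z), (cm y z), (asc x z y). reflexivity.
Qed.

Lemma jn_zero (A : algebra) (H : Ax A) : forall u y : A, jn A u (meet A y (comp A y)) = u.
Proof.
  pose proof H as [h9 [h4 h5]]; intros u y. unfold jn. rewrite (abs1 A H), h4. reflexivity.
Qed.

Lemma jn_abs (A : algebra) (H : Ax A) : forall x y : A, jn A x (meet A x y) = x.
Proof.
  pose proof H as [h9 [h4 h5]]; intros x y. unfold jn. rewrite (g16 A H), h4. reflexivity.
Qed.

Lemma S1 (A : algebra) (H : Ax A) : forall a p q r s : A,
  meet A (jn A (meet A a p) (meet A (comp A a) q)) (jn A (meet A a r) (meet A (comp A a) s))
  = jn A (meet A a (meet A p r)) (meet A (comp A a) (meet A q s)).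
Proof.
  pose proof H as [h9 [h4 h5]]; intros a p q r s.
  pose proof (comm A H) as cm.
  rewrite (distr A H).
  f_equal.
  - rewrite cm, (distr A H), (L1 A H), (L2 A H a r (comp A a) q), (cm (meet A a (comp A a))), (abs0 A H).
    apply jn_zero; auto.
  - rewrite cm, (distr A H), (L1 A H), (L2 A H (comp A a) s a p), (cm (meet A (comp A a) a)), (cm (comp A a) a), (abs0 A H).
    rewrite (jn_comm A H). apply jn_zero; auto.
Qed.

Lemma S2 (A : algebra) (H : Ax A) : forall a p q : A,
  comp A (jn A (meet A a p) (meet A (comp A a) q))
  = jn A (meet A a (comp A p)) (meet A (comp A a) (comp A q)).
Proof.
  pose proof H as [h9 [h4 h5]]; intros a p q.
  pose proof (comm A H) as cm. pose proof (assoc A H) as asc.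
  unfold jn at 1. rewrite h4.
  replace (comp A (meet A a p)) with (jn A (comp A a) (comp A p)) by (unfold jn; rewrite !h4; reflexivity).
  replace (comp A (meet A (comp A a) q)) with (jn A a (comp A q)) by (unfold jn; rewrite !h4; reflexivity).
  rewrite (distr A H).
  rewrite (cm (jn A (comp A a) (comp A p)) a), (distr A H), (jn_comm A H (meet A a (comp A a))), (jn_zero A H).
  rewrite (cm (jn A (comp A a) (comp A p)) (comp A q)), (distr A H).
  (* goal: jn (a p') (jn (q' a') (q' p')) = jn (a p') (a' q') *)
  rewrite (hform A H (meet A (comp A q) (comp A p)) a).
  rewrite (jn_comm A H (meet A (comp A q) (comp A a))).
  rewrite <- (jn_assoc A H (meet A (meet A (comp A q) (comp A p)) a)).
  rewrite (jn_assoc A H (meet A a (comp A p))).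
  replace (meet A (meet A (comp A q) (comp A p)) a) with (meet A (meet A a (comp A p)) (comp A q))
    by apply (AC3 A H).
  rewrite (jn_abs A H).
  rewrite (jn_comm A H (meet A (meet A (comp A q) (comp A p)) (comp A a))).
  replace (meet A (meet A (comp A q) (comp A p)) (comp A a)) with (meet A (meet A (comp A q) (comp A a)) (comp A p))
    by apply (AC3b A H).
  rewrite (jn_abs A H), (cm (comp A q) (comp A a)). reflexivity.
Qed.
Lemma r3_e36 (A : algebra) (H : Ax A) : forall v0 v1 : A, (meet A (comp A (meet A v0 v1)) (comp A (meet A v1 (comp A v0)))) = (comp A v1).
Proof.
  pose proof H as [h9 [h4 h5]]; intros v0 v1.
  pose proof ((comm A H) v1 v0) as i0.
  pose proof (h5 v1 v0) as i1.
  congruence.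
Qed.

Lemma oz (A : algebra) (H : Ax A) : forall k1 : A, (meet A (comp A (meet A k1 (comp A k1))) (meet A k1 (comp A k1))) = (meet A k1 (comp A k1)).
Proof.
  pose proof H as [h9 [h4 h5]]; intros k1.
  pose proof ((abs1 A H) (comp A k1) k1) as i0.
  pose proof ((assoc A H) k1 (comp A k1) (comp A (meet A k1 (comp A k1)))) as i1.
  pose proof ((comm A H) (comp A (meet A k1 (comp A k1))) (meet A k1 (comp A k1))) as i2.
  congruence.
Qed.

Lemma S3 (A : algebra) (H : Ax A) : forall k0 k1 : A, k0 = (comp A (meet A (comp A (meet A k0 (comp A (meet A k1 (comp A k1))))) (comp A (meet A (comp A k0) (meet A k1 (comp A k1)))))).
Proof.
  pose proof H as [h9 [h4 h5]]; intros k0 k1.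
  pose proof (h4 k0) as i0.
  pose proof ((abs1 A H) (comp A k0) k1) as i1.
  pose proof ((abs1 A H) k0 k1) as i2.
  pose proof ((abs0 A H) (comp A k0) k1) as i3.
  congruence.
Qed.

Lemma oo (A : algebra) (H : Ax A) : forall k1 : A, (meet A (comp A (meet A k1 (comp A k1))) (comp A (meet A k1 (comp A k1)))) = (comp A (meet A k1 (comp A k1))).
Proof.
  pose proof H as [h9 [h4 h5]]; intros k1.
  pose proof ((idem A H) (comp A (meet A k1 (comp A k1)))) as i0.
  congruence.
Qed.

Lemma S4 (A : algebra) (H : Ax A) : forall k0 k2 : A, k2 = (comp A (meet A (comp A (meet A k0 k2)) (comp A (meet A (comp A k0) k2)))).
Proof.
  pose proof H as [h9 [h4 h5]]; intros k0 k2.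
  pose proof (h4 k2) as i0.
  pose proof (r3_e36 A H k0 k2) as i1.
  pose proof ((comm A H) (comp A k0) k2) as i2.
  congruence.
Qed.

Lemma zo (A : algebra) (H : Ax A) : forall k1 : A, (meet A (meet A k1 (comp A k1)) (comp A (meet A k1 (comp A k1)))) = (meet A k1 (comp A k1)).
Proof.
  pose proof H as [h9 [h4 h5]]; intros k1.
  pose proof ((abs1 A H) (comp A k1) k1) as i0.
  pose proof ((assoc A H) k1 (comp A k1) (comp A (meet A k1 (comp A k1)))) as i1.
  congruence.
Qed.

Lemma zz (A : algebra) (H : Ax A) : forall k1 : A, (meet A (meet A k1 (comp A k1)) (meet A k1 (comp A k1))) = (meet A k1 (comp A k1)).
Proof.
  pose proof H as [h9 [h4 h5]]; intros k1.
  pose proof ((abs0 A H) k1 k1) as i0.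
  pose proof ((abs0 A H) (comp A k1) k1) as i1.
  pose proof ((assoc A H) k1 (comp A k1) (meet A k1 (comp A k1))) as i2.
  congruence.
Qed.

Fixpoint bnd (t : term) : nat :=
  match t with Var n => S n | Meet a b => Nat.max (bnd a) (bnd b) | Comp a => bnd a end.

Lemma eval_ext (A : algebra) (v w : nat -> A) (t : term) :
  (forall n, n < bnd t -> v n = w n) -> eval A v t = eval A w t.
Proof.
  induction t; simpl; intros Hn.
  - apply Hn; lia.
  - rewrite IHt1, IHt2; auto; intros; apply Hn; lia.
  - rewrite IHt; auto.
Qed.

Definition zero' (A : algebra) (u : A) : A := meet A u (comp A u).
Definition hb (A : algebra) (u : A) (b : bool) : A := if b then comp A (zero' A u) else zero' A u.

Lemma hom (A : algebra) (H : Ax A) (u : A) (w : nat -> bool) (t : term) :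
  eval A (fun n => hb A u (w n)) t = hb A u (eval two w t).
Proof.
  pose proof H as [h9 [h4 h5]].
  induction t; simpl.
  - reflexivity.
  - rewrite IHt1, IHt2. destruct (eval two w t1), (eval two w t2); simpl; unfold hb, zero'.
    + apply (oo A H).
    + apply (oz A H).
    + apply (zo A H).
    + apply (zz A H).
  - rewrite IHt. destruct (eval two w t); simpl; unfold hb, zero'.
    + apply h4.
    + reflexivity.
Qed.

Definition upd {X : Type} (v : nat -> X) (k : nat) (a : X) : nat -> X :=
  fun n => if Nat.eqb n k then a else v n.

Lemma shannon (A : algebra) (H : Ax A) (u : A) : forall t v k,
  eval A v t = jn A (meet A (v k) (eval A (upd v k (hb A u true)) t))
                    (meet A (comp A (v k)) (eval A (upd v k (hb A u false)) t)).
Proof.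
  induction t; intros v k; simpl.
  - unfold upd. destruct (Nat.eqb_spec n k).
    + subst. exact (S3 A H (v k) u).
    + exact (S4 A H (v k) (v n)).
  - rewrite (IHt1 v k), (IHt2 v k). apply (S1 A H).
  - rewrite (IHt v k). apply (S2 A H).
Qed.

Lemma step_pt (A : algebra) (u : A) (v' : nat -> A) (w : nat -> bool) (k : nat) (b : bool) (n : nat) :
  upd (fun n => if n <? S k then v' n else hb A u (w n)) k (hb A u b) n
  = (if n <? k then v' n else hb A u (upd w k b n)).
Proof.
  unfold upd. destruct (Nat.eqb_spec n k).
  - subst. rewrite Nat.ltb_irrefl. reflexivity.
  - destruct (Nat.ltb_spec n (S k)), (Nat.ltb_spec n k); try reflexivity; lia.
Qed.

Lemma complete (A : algebra) (H : Ax A) (e : identity) : holds two e -> holds A e.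
Proof.
  destruct e as [s t]. unfold holds; simpl. intros He v.
  set (u := v 0).
  assert (Q : forall k (w : nat -> bool) (v' : nat -> A),
     eval A (fun n => if n <? k then v' n else hb A u (w n)) s
     = eval A (fun n => if n <? k then v' n else hb A u (w n)) t).
  { induction k; intros w v'.
    - rewrite (eval_ext A _ (fun n => hb A u (w n)) s) by (intros; reflexivity).
      rewrite (eval_ext A _ (fun n => hb A u (w n)) t) by (intros; reflexivity).
      rewrite !(hom A H). f_equal. apply He.
    - rewrite (shannon A H u s _ k), (shannon A H u t _ k).
      rewrite (eval_ext A _ _ s (fun n _ => step_pt A u v' w k true n)).
      rewrite (eval_ext A _ _ t (fun n _ => step_pt A u v' w k true n)).
      rewrite (eval_ext A _ _ s (fun n _ => step_pt A u v' w k false n)).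
      rewrite (eval_ext A _ _ t (fun n _ => step_pt A u v' w k false n)).
      rewrite (IHk (upd w k true) v'), (IHk (upd w k false) v'). reflexivity. }
  set (N := Nat.max (bnd s) (bnd t)).
  rewrite (eval_ext A v (fun n => if n <? N then v n else hb A u false) s).
  2:{ intros n Hn. destruct (Nat.ltb_spec n N); [reflexivity | unfold N in *; lia]. }
  rewrite (eval_ext A v (fun n => if n <? N then v n else hb A u false) t).
  2:{ intros n Hn. destruct (Nat.ltb_spec n N); [reflexivity | unfold N in *; lia]. }
  apply (Q N (fun _ => false) v).
Qed.

Lemma models_Ax (A : algebra) : models A (A9 :: J4 :: J5 :: nil) -> Ax A.
Proof.
  intros HM. unfold models in HM.
  split; [|split].
  - intros a b c. exact (HM A9 (or_introl eq_refl) (fun n => match n with 0 => a | 1 => b | _ => c end)).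
  - intros a. exact (HM J4 (or_intror (or_introl eq_refl)) (fun _ => a)).
  - intros a b. exact (HM J5 (or_intror (or_intror (or_introl eq_refl))) (fun n => match n with 0 => a | _ => b end)).
Qed.

Definition alg1 : algebra := Algebra bool (fun a b => a) (fun a => a).
Definition alg2 : algebra := Algebra bool andb (fun _ => false).
Definition alg3 : algebra := Algebra bool andb (fun a => a).

Theorem theorem7p1 :
  defines_BA (A9 :: J4 :: J5 :: nil)
  /\ ~ consequence (J4 :: J5 :: nil) A9
  /\ ~ consequence (A9 :: J5 :: nil) J4
  /\ ~ consequence (A9 :: J4 :: nil) J5.
Proof.
  split; [|split; [|split]].
  - intros A. split.
    + intros HM e He. exact (complete A (models_Ax A HM) e He).
    + intros HB e He. apply HB.
      destruct He as [<-|[<-|[<-|[]]]]; intro v; unfold A9, J4, J5, x, y, z; simpl;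
        destruct (v 0), (v 1), (v 2); reflexivity.
  - intros Hc.
    assert (Hm : models alg1 (J4 :: J5 :: nil)).
    { intros e [<-|[<-|[]]]; intro v; reflexivity. }
    pose proof (Hc alg1 Hm (fun n => match n with 0 => true | _ => false end)) as E.
    discriminate E.
  - intros Hc.
    assert (Hm : models alg2 (A9 :: J5 :: nil)).
    { intros e [<-|[<-|[]]]; intro v; unfold A9, J5, x, y, z; simpl;
        destruct (v 0), (v 1), (v 2); reflexivity. }
    pose proof (Hc alg2 Hm (fun _ => true)) as E.
    discriminate E.
  - intros Hc.
    assert (Hm : models alg3 (A9 :: J4 :: nil)).
    { intros e [<-|[<-|[]]]; intro v; unfold A9, J4, x, y, z; simpl;
        destruct (v 0), (v 1), (v 2); reflexivity. }
    pose proof (Hc alg3 Hm (fun n => match n with 0 => true | _ => false end)) as E.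
    discriminate E.
Qed.
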